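(* Let $m\ge3$ be odd, let $s\ge2$ be even but not divisible by $4$, $n=sm$, and $\Gamma=C_n[mK_1]$. Let $\eta_1=(t,t,\dots,t)r$, $\eta_2=(\gamma_1,\dots,\gamma_n)z$ with $\gamma_{2i+1}=\gamma_{2i+2}=tc^{i}$ for $0\le i<n/2$, and $H=\langle\eta_1,\eta_2\rangle$. Then $\Gamma$ is the skeleton of a polytopal orientable reflexible map $\mathcal M$ of type $\{n,2m\}$ with $\mathrm{Aut}^+(\mathcal M)=H$.
   Context: $C_n[mK_1]$ is the graph with vertex set $\{1,\dots,n\}\times\{1,\dots,m\}$ in which $(i_1,j_1)$ is adjacent to $(i_2,j_2)$ if and only if $i_1\equiv i_2\pm1\pmod n$ (residues mod $n$ taken in $\{1,\dots,n\}$). Permutations act on the right ($x\alpha$ is the image of $x$) and products are composed left to right, both in $S_m$ and in $\mathrm{Aut}(\Gamma)$. For $\alpha_1,\dots,\alpha_n\in S_m$ and a permutation $x$ of $\{1,\dots,n\}$ in the dihedral group $D_n=\langle r,z\rangle$, $(\alpha_1,\dots,\alpha_n)x$ denotes the automorphism of $\Gamma$ mapping $(i,j)\mapsto(ix,\,j\alpha_i)$; $1$ denotes an identity permutation. Here $c=(1\,2\,\cdots\,m)\in S_m$; $t\in S_m$ fixes $1$ and maps $j\mapsto m-j+2$ for $2\le j\le m$; $r$ is the permutation $i\mapsto i+1 \pmod n$ of $\{1,\dots,n\}$; and $z$ fixes $1$ and maps $j\mapsto n-j+2$ for $2\le j\le n$. A map is a finite connected graph (its skeleton), viewed as a 1-dimensional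 CW complex, embedded in a closed surface so that every connected component of the complement (a face) is homeomorphic to an open disk. The map is polytopal if the boundary of each face is a cycle of the skeleton and every edge lies on the boundary of exactly two distinct faces. An automorphism of a map is an automorphism of the skeleton that extends to a homeomorphism of the surface; these form the group $\mathrm{Aut}(\mathcal M)$. A map is rotary if the stabiliser of each vertex contains a cyclic group acting transitively on the edges incident to it, and the stabiliser of each face contains a cyclic group acting transitively on the vertices (and edges) of the face; it has type $\{p,q\}$ if each face has $p$ edges on its boundary and the skeleton is $q$-valent. A rotary map is reflexible if the stabiliser of a face also contains an automorphism acting as a reflection of that face; a reflexible map is orientable or non-orientable according to its surface. For a polytopal rotary map and a flag (incident vertex–edge–face triple) $\Phi=(v,e,f)$, distinguished generators are automorphisms $\sigma_1,\sigma_2$ such that $\sigma_1$ preserves $f$ and acts as a one-step rotation of its boundary cycle, $\sigma_2$ fixes $v$ and acts as a one-step rotation of the edges around $v$, and $\sigma_1\sigma_2$ is an involution reversing $e$; the rotational group is $\mathrm{Aut}^+(\mathcal M)=\langle\sigma_1,\sigma_2\rangle$. *)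

(* Defs.v *)
From mathcomp Require Import all_boot all_fingroup.
Set Implicit Arguments. Unset Strict Implicit. Unset Printing Implicit Defensive.
Local Open Scope group_scope.

(* An edge is the 2-set [set x; y]; a face is encoded by its boundary  *)
(* cycle, i.e. the set of edges of that cycle; a map is a set of faces.*)

Definition is_gedge (V : finType) (adj : rel V) (e : {set V}) : bool :=
  [exists x, exists y, adj x y && (e == [set x; y])].

Definition fverts (V : finType) (f : {set {set V}}) : {set V} :=
  [set x | [exists e in f, x \in e]].

Definition is_cycle (V : finType) (adj : rel V) (f : {set {set V}}) : bool :=
  [&& f != set0, [forall e in f, is_gedge adj e],
      [forall x in fverts f, #|[set e in f | x \in e]| == 2%N] &
      [forall x in fverts f, forall y in fverts f,
          connect (fun a b : V => [set a; b] \in f) x y]].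

(* u, w are consecutive neighbours of v: {v,u} and {v,w} lie on a common face *)
Definition link (V : finType) (M : {set {set {set V}}}) (v u w : V) : bool :=
  (u != w) && [exists f in M, ([set v; u] \in f) && ([set v; w] \in f)].

(* M is a polytopal map with skeleton (V, adj): connected skeleton, faces
   are cycles of the skeleton, each edge on exactly two (distinct) faces,
   and the faces around each vertex form a single cycle (surface condition). *)
Definition polytopal_map (V : finType) (adj : rel V) (M : {set {set {set V}}}) : Prop :=
  [/\ forall x y : V, connect adj x y,
      forall f, f \in M -> is_cycle adj f,
      forall e, is_gedge adj e -> #|[set f in M | e \in f]| = 2%N &
      forall v u w, adj v u -> adj v w -> connect (link M v) u w].

Definition fimage (V : finType) (g : {perm V}) (f : {set {set V}}) : {set {set V}} :=
  [set [set g x | x in e] | e : {set V} in f].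

Definition map_aut (V : finType) (adj : rel V) (M : {set {set {set V}}}) (g : {perm V}) : bool :=
  [forall x, forall y, adj x y == adj (g x) (g y)] && [forall f in M, fimage g f \in M].

(* D is a cyclic orientation (set of darts) of the boundary cycle f *)
Definition cyc_orient (V : finType) (f : {set {set V}}) (D : {set V * V}) : bool :=
  [&& [forall d in D, [set d.1; d.2] \in f],
      [forall e in f, #|[set d in D | [set d.1; d.2] == e]| == 1%N] &
      [forall x in fverts f, #|[set d in D | d.1 == x]| == 1%N]].

Definition orientable (V : finType) (M : {set {set {set V}}}) : Prop :=
  exists O : {set {set V}} -> {set V * V},
    (forall f, f \in M -> cyc_orient f (O f)) /\
    (forall f g (x y : V), f \in M -> g \in M -> f != g ->
        (x, y) \in O f -> [set x; y] \in g -> (y, x) \in O g).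

Definition rotary (V : finType) (adj : rel V) (M : {set {set {set V}}}) : Prop :=
  (forall v : V, exists2 g, map_aut adj M g &
      g v = v /\
      (forall u w, adj v u -> adj v w ->
         exists k, [set (g ^+ k) x | x in [set v; u]] = [set v; w])) /\
  (forall f, f \in M -> exists2 g, map_aut adj M g &
      [/\ fimage g f = f,
          (forall x y, x \in fverts f -> y \in fverts f -> exists k, (g ^+ k) x = y) &
          (forall e e', e \in f -> e' \in f -> exists k, [set (g ^+ k) x | x in e] = e')]).

Definition acts_as_reflection (V : finType) (f : {set {set V}}) (g : {perm V}) : Prop :=
  fimage g f = f /\
  exists D, cyc_orient f D /\ (forall x y, (x, y) \in D -> (g y, g x) \in D).

Definition reflexible (V : finType) (adj : rel V) (M : {set {set {set V}}}) : Prop :=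
  rotary adj M /\
  (forall f, f \in M -> exists2 g, map_aut adj M g & acts_as_reflection f g).

Definition map_type (V : finType) (adj : rel V) (M : {set {set {set V}}}) (p q : nat) : Prop :=
  (forall f, f \in M -> #|f| = p) /\ (forall v : V, #|[set u | adj v u]| = q).

Definition dist_gens (V : finType) (adj : rel V) (M : {set {set {set V}}})
    (v : V) (e : {set V}) (f : {set {set V}}) (s1 s2 : {perm V}) : Prop :=
  [/\ [/\ f \in M, e \in f & v \in e],
      map_aut adj M s1 /\ map_aut adj M s2,
      fimage s1 f = f /\
        (exists D, cyc_orient f D /\ (forall x y, (x, y) \in D -> s1 x = y)),
      s2 v = v /\ (forall u, adj v u -> link M v u (s2 u)) &
      [/\ (s1 * s2) ^+ 2 = 1, s1 * s2 != 1 &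
          forall x, x \in e -> ((s1 * s2) x \in e) && ((s1 * s2) x != x)]].

(* The graph C_n[mK_1] and the permutations of the statement,          *)
(* with 0-based indices: paper's (i,j) is (i-1, j-1) here.            *)

Definition Cnm_adj (n m : nat) : rel ('I_n * 'I_m) :=
  fun p q => (q.1 == ordS p.1) || (p.1 == ordS q.1).

Definition cperm (m : nat) : {perm 'I_m} := perm (@ordS_inj m).
(* t : j |-> -j mod m (0-based), i.e. fixes 1 and j |-> m-j+2 (1-based) *)
Lemma tfun_inj (m : nat) : injective (fun j : 'I_m => ordS (rev_ord j)).
Proof. by move=> a b /ordS_inj /rev_ord_inj. Qed.
Definition tperm_ (m : nat) : {perm 'I_m} := perm (@tfun_inj m).
Definition rperm (n : nat) : {perm 'I_n} := cperm n.
Definition zperm (n : nat) : {perm 'I_n} := tperm_ n.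

(* (alpha_1, ..., alpha_n) x : (i, j) |-> (i x, j alpha_i) *)
Definition wr_fun (n m : nat) (a : 'I_n -> {perm 'I_m}) (x : {perm 'I_n})
  (p : 'I_n * 'I_m) : 'I_n * 'I_m := (x p.1, a p.1 p.2).
Lemma wr_inj (n m : nat) (a : 'I_n -> {perm 'I_m}) (x : {perm 'I_n}) :
  injective (wr_fun a x).
Proof.
by move=> [i j] [i' j'] [/perm_inj ei]; subst i'; move/perm_inj => ->.
Qed.
Definition wr (n m : nat) (a : 'I_n -> {perm 'I_m}) (x : {perm 'I_n}) :
  {perm 'I_n * 'I_m} := perm (@wr_inj n m a x).

Definition eta1 (n m : nat) : {perm 'I_n * 'I_m} := wr (fun _ => tperm_ m) (rperm n).
(* eta_2 = (gamma_1, ..., gamma_n) z, gamma_{2i+1} = gamma_{2i+2} = t c^i;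
   0-based index k corresponds to paper's k+1, so gamma = t c^(k/2) *)
Definition eta2 (n m : nat) : {perm 'I_n * 'I_m} :=
  wr (fun k : 'I_n => tperm_ m * cperm m ^+ (k %/ 2)) (zperm n).
Arguments Cnm_adj n m : clear implicits.

(* Main.v *)
Require Import Defs.
From mathcomp Require Import all_boot all_fingroup.
From mathcomp Require Import all_algebra.
From mathcomp Require Import ring zify.
Set Implicit Arguments. Unset Strict Implicit. Unset Printing Implicit Defensive.
Import GRing.Theory.
Lemma half_S i : (i.+1)./2 + i./2 = i.
Proof. rewrite -uphalfE uphalf_half; have := odd_double_half i; rewrite -muln2; lia. Qed.

Section Ring.
Variable k : nat.
Local Open Scope ring_scope.

Lemma ordS_add1 (i : 'I_k.+2) : ordS i = i + 1.
Proof. apply: val_inj => /=; by rewrite modnDmr addn1. Qed.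

Lemma tperm_E (j : 'I_k.+2) : tperm_ k.+2 j = - j.
Proof.
rewrite /tperm_ permE; apply: val_inj => /=.
have lt := ltn_ord j. by rewrite subnSK.
Qed.

Lemma rperm_E (j : 'I_k.+2) : rperm k.+2 j = j + 1.
Proof. by rewrite /rperm /cperm permE ordS_add1. Qed.
Lemma zperm_E (j : 'I_k.+2) : zperm k.+2 j = - j.
Proof. exact: tperm_E. Qed.
Lemma cpow_E (c : nat) (j : 'I_k.+2) : (cperm k.+2 ^+ c)%g j = j + c%:R.
Proof.
elim: c => [|c IH]; first by rewrite expg0 perm1 addr0.
by rewrite expgSr permM IH /cperm permE ordS_add1 mulrS; ring.
Qed.
End Ring.

Section Main.
Local Open Scope ring_scope.
Variables (n' k : nat).
Local Notation n := n'.+2.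
Local Notation m := k.+2.
Hypotheses (n3 : (0 < n')%N) (nev : ~~ odd n) (mn : (n%:R : 'I_m) = 0)
  (mn2 : ((n./2)%:R : 'I_m) = 0).
Local Notation V := ('I_n * 'I_m)%type.

Lemma one_neq (i : 'I_n) : (i + 1 == i) = false.
Proof. by apply/negbTE; rewrite -subr_eq0 (_ : i + 1 - i = 1) ?oner_eq0 //; ring. Qed.
Lemma two_neq (i : 'I_n) : (i + 1 + 1 == i) = false.
Proof.
apply/negbTE; rewrite -subr_eq0 (_ : i + 1 + 1 - i = 1 + 1); last ring.
apply/eqP => /(congr1 val) /=. rewrite !modn_small //; lia.
Qed.

Lemma valS (i : 'I_n) : (val (i + 1)%R = i.+1 \/ (val (i + 1)%R = 0 /\ i.+1 = n))%N.
Proof.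
rewrite -ordS_add1 /=. have := ltn_ord i; rewrite leq_eqVlt => /orP [/eqP->|lt].
  by right; rewrite modnn.
by left; rewrite modn_small.
Qed.

Definition vr (i : 'I_n) : 'I_m := (val i)%:R.
Definition hf (i : 'I_n) : 'I_m := ((val i)./2)%:R.

Lemma half_SR i : (((i.+1)./2)%:R : 'I_m) = i%:R - (i./2)%:R.
Proof. by rewrite -{2}(half_S i) natrD addrK. Qed.

Lemma vrS i : vr (i + 1) = vr i + 1.
Proof.
rewrite /vr natr1; case: (valS i) => [->|[-> e]] //.
by rewrite e mn.
Qed.

Lemma hfS i : hf (i + 1) = vr i - hf i.
Proof.
rewrite /hf /vr -half_SR; case: (valS i) => [->|[-> e]] //.
by rewrite e mn2.
Qed.

Lemma valN (i : 'I_n) : val (- i)%R = if val i == 0%N then 0%N else (n - i)%N.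
Proof.
rewrite /=; case: eqP => [->|h]; first by rewrite subn0 modnn.
rewrite modn_small //; have := ltn_ord i; lia.
Qed.

Lemma vrN i : vr (- i) = - vr i.
Proof.
rewrite /vr valN; case: eqP => [->|h]; first by rewrite oppr0.
by rewrite natrB ?mn ?sub0r //; apply: ltnW.
Qed.

Lemma half_N (i : nat) : (i <= n)%N -> ((n - i)./2 + i = n./2 + i./2)%N.
Proof.
move=> le; have h1 := halfD (n - i) i; rewrite subnK // in h1.
have h2 := odd_double_half i.
have h3 : odd (n - i) = odd i by rewrite oddB // (negbTE nev).
rewrite h3 in h1; rewrite -muln2 in h2.
case: (odd i) h1 h2 => /= h1 h2; lia.
Qed.

Lemma hfN i : hf (- i) = hf i - vr i.
Proof.
rewrite /hf /vr valN; case: eqP => [->|h]; first by rewrite subrr.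
have := congr1 (fun x => x%:R : 'I_m) (half_N (ltnW (ltn_ord i))).
rewrite !natrD mn2 add0r => <-. by rewrite addrK.
Qed.

Definition fam (p : 'I_m * 'I_m * 'I_m) (i : 'I_n) : 'I_m :=
  p.1.1 + p.1.2 * vr i + p.2 * hf i.
Definition shiftp (p : 'I_m * 'I_m * 'I_m) :=
  (p.1.1 + p.1.2, p.1.2 + p.2, - p.2).
Definition negp (p : 'I_m * 'I_m * 'I_m) := (p.1.1, - (p.1.2 + p.2), p.2).

Lemma famS p i : fam p (i + 1) = fam (shiftp p) i.
Proof. case: p => [[a d] e]; rewrite /fam /= vrS hfS; ring. Qed.
Lemma famN p i : fam p (- i) = fam (negp p) i.
Proof. case: p => [[a d] e]; rewrite /fam /= vrN hfN; ring. Qed.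


Lemma adjE (x y : V) : Cnm_adj n m x y = (y.1 == x.1 + 1) || (x.1 == y.1 + 1).
Proof. by rewrite /Cnm_adj !ordS_add1. Qed.

Definition Pv (phi : 'I_n -> 'I_m) i : V := (i, phi i).
Definition Ed phi i : {set V} := [set Pv phi i; Pv phi (i + 1)].
Definition Cf phi : {set {set V}} := [set Ed phi i | i : 'I_n].

Lemma Pv_inj phi psi i j : Pv phi i = Pv psi j -> i = j /\ phi i = psi i.
Proof. by case=> <- ->. Qed.

Lemma Ed_eq phi psi i j : Ed phi i = Ed psi j ->
  [/\ i = j, phi i = psi i & phi (i + 1) = psi (i + 1)].
Proof.
move=> E.
have h1 : Pv phi i \in Ed psi j by rewrite -E set21.
have h2 : Pv phi (i + 1) \in Ed psi j by rewrite -E set22.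
rewrite !inE in h1 h2.
case/orP: h1 => /eqP /Pv_inj [ij e1]; case/orP: h2 => /eqP /Pv_inj [ij2 e2].
- by subst; move/eqP: ij2; rewrite one_neq.
- by subst; split.
- by subst; move/eqP: ij2; rewrite two_neq.
- by subst; move/addIr: ij2 => /eqP; rewrite one_neq.
Qed.

Lemma Ed_inj phi : injective (Ed phi).
Proof. by move=> i j /Ed_eq []. Qed.

Lemma Ed_set2 phi i x y : [set x; y] = Ed phi i ->
  (x = Pv phi i /\ y = Pv phi (i + 1)) \/ (x = Pv phi (i + 1) /\ y = Pv phi i).
Proof.
move=> E.
have h1 : x \in Ed phi i by rewrite -E set21.
have h2 : y \in Ed phi i by rewrite -E set22.
have h3 : Pv phi i \in [set x; y] by rewrite E set21.
have h4 : Pv phi (i + 1) \in [set x; y] by rewrite E set22.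
rewrite !inE in h1 h2 h3 h4.
case/orP: h1 => /eqP ex; case/orP: h2 => /eqP ey; subst; auto.
- by move: h4; rewrite orbb => /eqP /Pv_inj [/eqP]; rewrite one_neq.
- by move: h3; rewrite orbb => /eqP /Pv_inj [/esym/eqP]; rewrite one_neq.
Qed.

Lemma fverts_Cf phi x : x \in fverts (Cf phi) <-> exists i, x = Pv phi i.
Proof.
rewrite !inE; split.
  case/existsP => e /andP [/imsetP [i _ ->]]; rewrite !inE => /orP [] /eqP ->; by eexists.
case=> i ->; apply/existsP; exists (Ed phi i); rewrite imset_f ?inE ?eqxx //.
Qed.

Lemma connect_iter (R : rel V) (Q : 'I_n -> V) :
  (forall i, R (Q i) (Q (i + 1))) -> forall i j, connect R (Q i) (Q j).
Proof.
move=> st.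
have H : forall t i, connect R (Q i) (Q (i + t%:R)).
  elim=> [|t IH] i; first by rewrite addr0 connect0.
  apply: connect_trans (IH i) _; apply: connect1.
  by rewrite -natr1 addrA st.
move=> i j; have := H (val (j - i)) i; rewrite natr_Zp.
by rewrite addrC subrK.
Qed.

Lemma Cf_cycle phi : is_cycle (Cnm_adj n m) (Cf phi).
Proof.
apply/and4P; split.
- by apply/set0Pn; exists (Ed phi 0); apply: imset_f.
- apply/forall_inP => e /imsetP [i _ ->]; apply/existsP; exists (Pv phi i).
  by apply/existsP; exists (Pv phi (i + 1)); rewrite adjE /Ed /= !eqxx.
- apply/forall_inP => x /fverts_Cf [i ->].
  have -> : [set e in Cf phi | Pv phi i \in e] = [set Ed phi i; Ed phi (i - 1)].
    apply/setP => e; rewrite !inE; apply/andP/orP.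
      case=> /imsetP [j _ ->]; rewrite !inE => /orP [] /eqP /Pv_inj [ij _].
        by subst; left.
      by right; rewrite ij addrK.
    case=> /eqP ->; split; rewrite ?imset_f // !inE ?eqxx //.
    by rewrite subrK eqxx orbT.
  rewrite cards2; suff -> : Ed phi i != Ed phi (i - 1) by [].
  apply/negP => /eqP /Ed_inj E.
  by move: (one_neq (i - 1)); rewrite subrK -E eqxx.
- apply/forall_inP => x /fverts_Cf [i ->]; apply/forall_inP => y /fverts_Cf [j ->].
  by apply: connect_iter => l; apply: imset_f.
Qed.

Lemma card_Cf phi : #|Cf phi| = n.
Proof. by rewrite card_imset ?card_ord //; apply: Ed_inj. Qed.

Definition Dfwd (f : {set {set V}}) : {set V * V} :=
  [set d : V * V | ([set d.1; d.2] \in f) && (d.2.1 == d.1.1 + 1)].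
Definition Dbwd (f : {set {set V}}) : {set V * V} :=
  [set d : V * V | ([set d.1; d.2] \in f) && (d.1.1 == d.2.1 + 1)].

Lemma set2C_ (x y : V) : [set x; y] = [set y; x].
Proof. by apply/setP => z; rewrite !inE orbC. Qed.

Lemma Dfwd_Cf phi d : d \in Dfwd (Cf phi) <-> exists i, d = (Pv phi i, Pv phi (i + 1)).
Proof.
rewrite !inE; split.
  case/andP => /imsetP [i _ /Ed_set2 [[e1 e2]|[e1 e2]]] h.
    by exists i; case: d e1 e2 {h} => /= ? ? -> ->.
  by move: h; rewrite e1 e2 /= eq_sym two_neq.
by case=> i ->; apply/andP; split; [apply: (imset_f (Ed phi)) | rewrite /= eqxx].
Qed.

Lemma Dbwd_Cf phi d : d \in Dbwd (Cf phi) <-> exists i, d = (Pv phi (i + 1), Pv phi i).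
Proof.
rewrite !inE; split.
  case/andP => /imsetP [i _ /Ed_set2 [[e1 e2]|[e1 e2]]] h.
    by move: h; rewrite e1 e2 /= eq_sym two_neq.
  by exists i; case: d e1 e2 {h} => /= ? ? -> ->.
by case=> i ->; apply/andP; split; [rewrite /= set2C_; apply: (imset_f (Ed phi)) | rewrite /= eqxx].
Qed.

Lemma orient_fwd phi : cyc_orient (Cf phi) (Dfwd (Cf phi)).
Proof.
apply/and3P; split.
- by apply/forall_inP => d; rewrite !inE => /andP [].
- apply/forall_inP => e /imsetP [i _ ->].
  have -> : [set d in Dfwd (Cf phi) | [set d.1; d.2] == Ed phi i] =
            [set (Pv phi i, Pv phi (i + 1))].
    apply/setP => d; rewrite in_set in_set1; apply/andP/eqP.
      by case=> /Dfwd_Cf [j ->] /= /eqP /Ed_inj ->.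
    move=> ->; split; last by rewrite eqxx.
    by apply/Dfwd_Cf; exists i.
  by rewrite cards1.
- apply/forall_inP => x /fverts_Cf [i ->].
  have -> : [set d in Dfwd (Cf phi) | d.1 == Pv phi i] =
            [set (Pv phi i, Pv phi (i + 1))].
    apply/setP => d; rewrite in_set in_set1; apply/andP/eqP.
      by case=> /Dfwd_Cf [j ->] /= /eqP /Pv_inj [->].
    move=> ->; split; last by rewrite eqxx.
    by apply/Dfwd_Cf; exists i.
  by rewrite cards1.
Qed.

Lemma orient_bwd phi : cyc_orient (Cf phi) (Dbwd (Cf phi)).
Proof.
apply/and3P; split.
- by apply/forall_inP => d; rewrite !inE => /andP [].
- apply/forall_inP => e /imsetP [i _ ->].
  have -> : [set d in Dbwd (Cf phi) | [set d.1; d.2] == Ed phi i] =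
            [set (Pv phi (i + 1), Pv phi i)].
    apply/setP => d; rewrite in_set in_set1; apply/andP/eqP.
      by case=> /Dbwd_Cf [j ->] /=; rewrite set2C_ => /eqP /Ed_inj ->.
    move=> ->; split; last by rewrite set2C_ eqxx.
    by apply/Dbwd_Cf; exists i.
  by rewrite cards1.
- apply/forall_inP => x /fverts_Cf [i ->].
  have -> : [set d in Dbwd (Cf phi) | d.1 == Pv phi i] =
            [set (Pv phi i, Pv phi (i - 1))].
    apply/setP => d; rewrite in_set in_set1; apply/andP/eqP.
      case=> /Dbwd_Cf [j ->] /= /eqP /Pv_inj [ji _].
      by rewrite -ji addrK.
    move=> ->; split; last by rewrite eqxx.
    by apply/Dbwd_Cf; exists (i - 1); rewrite subrK.
  by rewrite cards1.
Qed.


Local Notation Tr := ('I_m * 'I_m * 'I_m)%type.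
Definition face (p : Tr) := Cf (fam p).
Definition Famset : {set Tr} := [set p : Tr | (p.2 == 0) || (p.2 == 1)].
Definition Mset := [set face p | p in Famset].

Lemma vr0 : vr 0 = 0. Proof. by []. Qed.
Lemma hf0 : hf 0 = 0. Proof. by []. Qed.

Lemma fam_inj p q : (forall i, fam p i = fam q i) -> p = q.
Proof.
case: p => [[a d] e]; case: q => [[a' d'] e'] H.
have F0 : forall a d e, fam (a, d, e) 0 = a by move=> *; rewrite /fam vr0 hf0 /=; ring.
have F1 : forall a d e, fam (a, d, e) (0 + 1) = a + d.
  by move=> *; rewrite /fam vrS hfS vr0 hf0 /=; ring.
have F2 : forall a d e, fam (a, d, e) (0 + 1 + 1) = a + d + d + e.
  by move=> *; rewrite /fam !vrS !hfS vrS vr0 hf0 /=; ring.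
have h0 := H 0; have h1 := H (0 + 1); have h2 := H (0 + 1 + 1).
rewrite !F0 in h0; subst a'.
rewrite !F1 in h1; move/addrI: h1 => h1; subst d'.
by rewrite !F2 in h2; move/addrI: h2 => ->.
Qed.

Lemma Cf_inj phi psi : Cf phi = Cf psi -> forall i, phi i = psi i.
Proof.
move=> E i; have : Ed phi i \in Cf psi by rewrite -E; apply: imset_f.
by case/imsetP => j _ /Ed_eq [].
Qed.

Lemma face_inj p q : face p = face q -> p = q.
Proof. by move/Cf_inj/fam_inj. Qed.

Lemma param_det p q i : p.2 = q.2 -> fam p i = fam q i ->
  fam p (i + 1) = fam q (i + 1) -> p = q.
Proof.
case: p => [[a d] e]; case: q => [[a' d'] e'] /= <- h1.
rewrite !famS => h2.
have hd : forall a d, d = fam (shiftp (a, d, e)) i - fam (a, d, e) i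
                          - e * vr i + e * hf i *+ 2.
  by move=> ? ?; rewrite /fam /=; ring.
have ed : d = d' by rewrite (hd a d) (hd a' d') h1 h2.
subst d'.
have ha : forall a, a = fam (a, d, e) i - d * vr i - e * hf i.
  by move=> ?; rewrite /fam /=; ring.
by rewrite (ha a) (ha a') h1.
Qed.

Lemma imset2_ (g : V -> V) (x y : V) : [set g z | z in [set x; y]] = [set g x; g y].
Proof. by rewrite imsetU1 imset_set1. Qed.

Lemma fimage_tr (g : {perm V}) phi psi c :
  (forall i, g (Pv phi i) = Pv psi (i + c)) -> fimage g (Cf phi) = Cf psi.
Proof.
move=> H; rewrite /fimage /Cf -imset_comp.
apply/setP => e; apply/imsetP/imsetP => [[i _ ->]|[j _ ->]].
  by exists (i + c) => //=; rewrite /Ed imset2_ !H addrAC.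
exists (j - c) => //=; rewrite /Ed imset2_ !H subrK.
by have -> : j - c + 1 + c = j + 1 by ring.
Qed.

Lemma fimage_ref (g : {perm V}) phi psi :
  (forall i, g (Pv phi i) = Pv psi (- i)) -> fimage g (Cf phi) = Cf psi.
Proof.
move=> H; rewrite /fimage /Cf -imset_comp.
have E : forall i : 'I_n, - i = - (i + 1) + 1 by move=> i; ring.
apply/setP => e; apply/imsetP/imsetP => [[i _ ->]|[j _ ->]].
  by exists (- (i + 1)) => //=; rewrite /Ed imset2_ !H set2C_ -E.
exists (- (j + 1)) => //=; rewrite /Ed imset2_ !H opprK.
by rewrite (_ : - (- (j + 1) + 1) = j) 1?set2C_ //; ring.
Qed.

Definition adjn := Cnm_adj n m.

Lemma fimageM (g h : {perm V}) (f : {set {set V}}) :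
  fimage (g * h)%g f = fimage h (fimage g f).
Proof.
rewrite /fimage -imset_comp; apply: eq_imset => e /=.
by rewrite -imset_comp; apply: eq_imset => x /=; rewrite permM.
Qed.

Lemma fimage1 (f : {set {set V}}) : fimage 1%g f = f.
Proof.
rewrite /fimage -[RHS]imset_id; apply: eq_imset => e /=.
by rewrite -[RHS]imset_id; apply: eq_imset => x; rewrite perm1.
Qed.

Lemma map_aut1 : map_aut adjn Mset 1%g.
Proof.
apply/andP; split; first by apply/forallP => x; apply/forallP => y; rewrite !perm1.
by apply/forall_inP => f fM; rewrite fimage1.
Qed.

Lemma map_autM g h : map_aut adjn Mset g -> map_aut adjn Mset h -> map_aut adjn Mset (g * h)%g.
Proof.
case/andP => /forallP ga /forall_inP gf; case/andP => /forallP ha /forall_inP hf'.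
apply/andP; split.
  apply/forallP => x; apply/forallP => y; rewrite !permM.
  by move: (ga x) (ha (g x)) => /forallP /(_ y) /eqP -> /forallP /(_ (g y)).
by apply/forall_inP => f fM; rewrite fimageM; apply/hf'/gf.
Qed.

Lemma map_autX g k' : map_aut adjn Mset g -> map_aut adjn Mset (g ^+ k')%g.
Proof.
move=> ga; elim: k' => [|k' IH]; first by rewrite expg0 map_aut1.
by rewrite expgS map_autM.
Qed.

Lemma map_autV g : map_aut adjn Mset g -> map_aut adjn Mset (g^-1)%g.
Proof. by move=> ga; rewrite invg_expg map_autX. Qed.

Lemma map_aut_adj g x y : map_aut adjn Mset g -> adjn (g x) (g y) = adjn x y.
Proof. by case/andP => /forallP /(_ x) /forallP /(_ y) /eqP ->. Qed.

Lemma map_aut_face g f : map_aut adjn Mset g -> f \in Mset -> fimage g f \in Mset.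
Proof. by case/andP => _ /forall_inP; apply. Qed.

Lemma map_autI (g : {perm V}) :
  (forall x y, adjn (g x) (g y) = adjn x y) ->
  (forall p, p \in Famset -> exists2 q, q \in Famset & fimage g (face p) = face q) ->
  map_aut adjn Mset g.
Proof.
move=> ha hf'; apply/andP; split.
  by apply/forallP => x; apply/forallP => y; rewrite ha.
apply/forall_inP => f /imsetP [p pF ->].
by case: (hf' p pF) => q qF ->; apply: imset_f.
Qed.


Definition AW (x : {perm 'I_n}) (eps : bool) (b : 'I_n -> 'I_m) : {perm V} :=
  wr (fun i => ((if eps then tperm_ m else 1) * cperm m ^+ (val (b i)))%g) x.

Lemma AW_E x eps b i j : AW x eps b (i, j) = (x i, (if eps then - j else j) + b i).
Proof.
rewrite /AW /wr permE /wr_fun /= permM cpow_E natr_Zp.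
by case: eps; rewrite ?tperm_E ?perm1.
Qed.

Lemma eta1_E i j : eta1 n m (i, j) = (i + 1, - j).
Proof. by rewrite /eta1 /wr permE /wr_fun /= rperm_E tperm_E. Qed.

Lemma eta2_E i j : eta2 n m (i, j) = (- i, - j + hf i).
Proof. by rewrite /eta2 /wr permE /wr_fun /= zperm_E permM tperm_E cpow_E divn2. Qed.

Lemma adj_shift (g : {perm V}) c : (forall x, (g x).1 = x.1 + c) ->
  forall x y, adjn (g x) (g y) = adjn x y.
Proof.
move=> H x y; rewrite /adjn !adjE !H.
have E : forall a b : 'I_n, (b + c == a + c + 1) = (b == a + 1).
  move=> a b; rewrite -subr_eq0 -[in RHS]subr_eq0.
  by have -> : b + c - (a + c + 1) = b - (a + 1) by ring.
by rewrite !E.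
Qed.

Lemma adj_neg (g : {perm V}) : (forall x, (g x).1 = - x.1) ->
  forall x y, adjn (g x) (g y) = adjn x y.
Proof.
move=> H x y; rewrite /adjn !adjE !H.
have E : forall a b : 'I_n, (- b == - a + 1) = (a == b + 1).
  move=> a b; rewrite -subr_eq0 -[in RHS]subr_eq0.
  by have -> : - b - (- a + 1) = a - (b + 1) by ring.
by rewrite !E orbC.
Qed.

Definition shinv (p : Tr) : Tr := (p.1.1 - p.1.2 - p.2, p.1.2 + p.2, - p.2).
Definition padd (p q : Tr) : Tr := (p.1.1 + q.1.1, p.1.2 + q.1.2, p.2 + q.2).
Definition popp (p : Tr) : Tr := (- p.1.1, - p.1.2, - p.2).

Lemma shiftp_inv p : shiftp (shinv p) = p.
Proof. by case: p => [[a d] e]; rewrite /shiftp /shinv /=; congr (_, _, _); ring. Qed.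
Lemma negpK p : negp (negp p) = p.
Proof. by case: p => [[a d] e]; rewrite /negp /=; congr (_, _, _); ring. Qed.
Lemma fam_add p q i : fam (padd p q) i = fam p i + fam q i.
Proof. by case: p => [[a d] e]; case: q => [[a' d'] e']; rewrite /fam /=; ring. Qed.
Lemma fam_opp p i : fam (popp p) i = - fam p i.
Proof. by case: p => [[a d] e]; rewrite /fam /=; ring. Qed.

Lemma Famset_eq p q : p.2 = q.2 -> (p \in Famset) = (q \in Famset).
Proof. by rewrite !inE => ->. Qed.

Definition Tsh (c : 'I_m) := AW 1%g false (fun _ => c).
Definition Rq (q : Tr) := AW (rperm n) true (fun i => fam q i + fam q (i + 1)).
Definition Fq (q : Tr) := AW (zperm n) false (fun i => fam q (- i) - fam q i).

Lemma Tsh_E c i j : Tsh c (i, j) = (i, j + c).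
Proof. by rewrite /Tsh AW_E perm1. Qed.
Lemma Rq_E q i j : Rq q (i, j) = (i + 1, - j + (fam q i + fam q (i + 1))).
Proof. by rewrite /Rq AW_E rperm_E. Qed.
Lemma Fq_E q i j : Fq q (i, j) = (- i, j + (fam q (- i) - fam q i)).
Proof. by rewrite /Fq AW_E zperm_E. Qed.

Lemma aut_eta1 : map_aut adjn Mset (eta1 n m).
Proof.
apply: map_autI; first by apply: (adj_shift (c := 1)) => [[i j]]; rewrite eta1_E.
move=> p pF; exists (shinv (popp p)).
  by rewrite -(Famset_eq (p := p)) //; case: p {pF} => [[a d] e]; rewrite /= opprK.
apply: (fimage_tr (c := 1)) => i; rewrite /Pv eta1_E famS shiftp_inv fam_opp //.
Qed.

Lemma aut_eta2 : map_aut adjn Mset (eta2 n m).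
Proof.
apply: map_autI; first by apply: adj_neg => [[i j]]; rewrite eta2_E.
move=> p pF; exists (negp (padd (popp p) (0, 0, 1))).
  move: pF; rewrite !inE /= => /orP [] /eqP ->; rewrite ?oppr0 ?add0r ?addNr eqxx //.
apply: fimage_ref => i; rewrite /Pv eta2_E famN negpK fam_add fam_opp; congr (_, _).
by rewrite /fam /=; ring.
Qed.

Lemma aut_Tsh c : map_aut adjn Mset (Tsh c).
Proof.
apply: map_autI; first by apply: (adj_shift (c := 0)) => [[i j]]; rewrite Tsh_E addr0.
move=> p pF; exists (padd p (c, 0, 0)).
  by rewrite -(Famset_eq (p := p)) //; case: p {pF} => [[a d] e]; rewrite /= addr0.
apply: (fimage_tr (c := 0)) => i; rewrite /Pv Tsh_E addr0 fam_add; congr (_, _).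
by rewrite /fam /=; ring.
Qed.

Lemma aut_Rq q : map_aut adjn Mset (Rq q).
Proof.
apply: map_autI; first by apply: (adj_shift (c := 1)) => [[i j]]; rewrite Rq_E.
move=> p pF; exists (shinv (padd (popp p) (padd q (shiftp q)))).
  rewrite -(Famset_eq (p := p)) //; case: p {pF} => [[a d] e]; case: q => [[a' d'] e'].
  by rewrite /=; ring.
apply: (fimage_tr (c := 1)) => i; rewrite /Pv Rq_E [fam (shinv _) _]famS shiftp_inv !fam_add fam_opp.
by rewrite famS.
Qed.

Lemma aut_Fq q : map_aut adjn Mset (Fq q).
Proof.
apply: map_autI; first by apply: adj_neg => [[i j]]; rewrite Fq_E.
move=> p pF; exists (negp (padd p (padd (negp q) (popp q)))).
  rewrite -(Famset_eq (p := p)) //; case: p {pF} => [[a d] e]; case: q => [[a' d'] e'].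
  by rewrite /=; ring.
apply: fimage_ref => i; rewrite /Pv Fq_E [fam (negp _) _]famN negpK !fam_add fam_opp.
by rewrite famN.
Qed.


Lemma inCf phi i a b : a = Pv phi i -> b = Pv phi (i + 1) -> [set a; b] \in Cf phi.
Proof. by move=> -> ->; apply: (imset_f (Ed phi)). Qed.
Lemma inCf' phi i a b : b = Pv phi i -> a = Pv phi (i + 1) -> [set a; b] \in Cf phi.
Proof. by move=> -> ->; rewrite set2C_; apply: (imset_f (Ed phi)). Qed.

Lemma link_aut h v u w : map_aut adjn Mset h -> link Mset v u w ->
  link Mset (h v) (h u) (h w).
Proof.
move=> ha /andP [uw /existsP [f /andP [fM /andP [h1 h2]]]].
apply/andP; split; first by rewrite (inj_eq perm_inj).
apply/existsP; exists (fimage h f); rewrite map_aut_face //=.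
by rewrite -!imset2_ !(imset_f (fun e : {set V} => [set h x | x in e])).
Qed.

Definition VP (v : V) (g : {perm V}) :=
  [/\ map_aut adjn Mset g, g v = v,
      forall u, adjn v u -> link Mset v u (g u) &
      forall u w, adjn v u -> adjn v w -> exists k', (g ^+ k')%g u = w].

Lemma VP_transfer v g h : map_aut adjn Mset h -> VP v g -> VP (h v) (h^-1 * g * h)%g.
Proof.
move=> ha [ga gv gl gt]; split.
- by rewrite !map_autM ?map_autV.
- by rewrite !permM permK gv.
- move=> u hu; have a1 : adjn v (h^-1%g u).
    by rewrite -(map_aut_adj _ _ ha) permKV.
  have := link_aut ha (gl _ a1); rewrite permKV.
  by rewrite !permM.
- move=> u w hu hw.
  have a1 : adjn v (h^-1%g u) by rewrite -(map_aut_adj _ _ ha) permKV.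
  have a2 : adjn v (h^-1%g w) by rewrite -(map_aut_adj _ _ ha) permKV.
  case: (gt _ _ a1 a2) => t ht; exists t.
  have -> : (h^-1 * g * h)%g = (g ^ h)%g by rewrite conjgE mulgA.
  by rewrite -conjXg conjgE !permM ht permKV.
Qed.

Lemma vr1 : vr 1 = 1.
Proof. by rewrite -(add0r 1) vrS vr0 add0r. Qed.
Lemma hf1 : hf 1 = 0.
Proof. by rewrite -(add0r 1) hfS vr0 hf0 subr0. Qed.
Lemma hfm1 : hf (- 1) = - 1.
Proof. by rewrite hfN hf1 vr1 sub0r. Qed.

Definition v0 : V := (0, 0).

Lemma adj_v0 u : adjn v0 u -> u.1 = 1 \/ u.1 = - 1.
Proof.
rewrite /adjn adjE /= add0r => /orP [/eqP ->|/eqP E]; [by left | right].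
by rewrite -[u.1](addrK 1) -E sub0r.
Qed.

Lemma one_neq_m1 : (1 : 'I_n) != - 1.
Proof.
apply/negP => /eqP E; move: (two_neq 0); rewrite add0r {2}E.
by rewrite subrr eqxx.
Qed.

Lemma eta2_pow2 t y : (eta2 n m ^+ (2 * t))%g (1, y) = (1, y - t%:R).
Proof.
elim: t y => [|t IH] y; first by rewrite muln0 expg0 perm1 subr0.
rewrite mulnS expgD permM !expgS expg0 mulg1 !permM !eta2_E hf1 hfm1 opprK IH.
by congr (_, _); rewrite -natr1; ring.
Qed.

Lemma eta2_pow2S t y : (eta2 n m ^+ (2 * t).+1)%g (1, y) = (- 1, - y + t%:R).
Proof. by rewrite expgSr permM eta2_pow2 eta2_E hf1 addr0 opprB addrC. Qed.

Lemma VP_v0 : VP v0 (eta2 n m).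
Proof.
split.
- exact: aut_eta2.
- by rewrite /v0 eta2_E hf0 addr0 !oppr0.
- case=> i y /adj_v0 /= [->|->].
    rewrite eta2_E hf1 addr0; apply/andP; split.
      by apply/negP => /eqP/(congr1 fst)/eqP; rewrite /= (negbTE one_neq_m1).
    apply/existsP; exists (face (0, y, 0)); apply/andP; split.
      by apply: imset_f; rewrite inE eqxx.
    apply/andP; split.
      apply: (inCf (i := 0)); rewrite /Pv /fam /= ?addNr ?add0r ?vr0 ?hf0 ?vrN ?hfN ?vr1 ?hf1;
      congr (_, _); ring.
    apply: (inCf' (i := - 1)); rewrite /Pv /fam /= ?addNr ?add0r ?vr0 ?hf0 ?vrN ?hfN ?vr1 ?hf1;
    congr (_, _); ring.
  rewrite eta2_E hfm1 opprK; apply/andP; split.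
    by apply/negP => /eqP/(congr1 fst)/eqP; rewrite /= eq_sym (negbTE one_neq_m1).
  apply/existsP; exists (face (0, - y - 1, 1)); apply/andP; split.
    by apply: imset_f; rewrite inE eqxx orbT.
  apply/andP; split.
    apply: (inCf' (i := - 1)); rewrite /Pv /fam /= ?addNr ?add0r ?vr0 ?hf0 ?vrN ?hfN ?vr1 ?hf1;
    congr (_, _); ring.
  apply: (inCf (i := 0)); rewrite /Pv /fam /= ?addNr ?add0r ?vr0 ?hf0 ?vrN ?hfN ?vr1 ?hf1;
  congr (_, _); ring.
- have to1 : forall u, adjn v0 u -> exists a, (eta2 n m ^+ a)%g u = (1, 0).
    case=> i y /adj_v0 /= [->|->].
      by exists (2 * val y)%N; rewrite eta2_pow2 natr_Zp subrr.
    exists (2 * val (- y - 1)).+1; rewrite expgS permM eta2_E hfm1 opprK eta2_pow2.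
    by rewrite natr_Zp; congr (_, _); ring.
  have from1 : forall u, adjn v0 u -> exists b, (eta2 n m ^+ b)%g (1, 0) = u.
    case=> i y /adj_v0 /= [->|->].
      by exists (2 * val (- y))%N; rewrite eta2_pow2 natr_Zp sub0r opprK.
    by exists (2 * val y).+1; rewrite eta2_pow2S natr_Zp oppr0 add0r.
  move=> u w /to1 [a ha] /from1 [b hb]; exists (a + b)%N.
  by rewrite expgD permM ha hb.
Qed.


Lemma eta1_pow t : (eta1 n m ^+ t)%g v0 = (t%:R, 0).
Proof.
elim: t => [|t IH]; first by rewrite expg0 perm1.
by rewrite expgSr permM IH eta1_E oppr0 -natr1.
Qed.

Lemma VP_all v : exists g, VP v g.
Proof.
pose h := (eta1 n m ^+ (val v.1) * Tsh v.2)%g.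
have ha : map_aut adjn Mset h by rewrite map_autM ?map_autX ?aut_eta1 ?aut_Tsh.
have hv : h v0 = v.
  by rewrite permM eta1_pow Tsh_E natr_Zp add0r -surjective_pairing.
have := VP_transfer ha VP_v0; rewrite hv => HV; by eexists; exact: HV.
Qed.

Lemma fix_pow (g : {perm V}) v t : g v = v -> (g ^+ t)%g v = v.
Proof. by move=> gv; elim: t => [|t IH]; rewrite ?expg0 ?perm1 // expgSr permM IH gv. Qed.

Lemma VP_link v g : VP v g -> forall u w, adjn v u -> adjn v w -> connect (link Mset v) u w.
Proof.
case=> ga gv gl gt u w hu hw; case: (gt _ _ hu hw) => t <-.
elim: t => [|t IH]; first by rewrite expg0 perm1 connect0.
apply: connect_trans IH _; apply: connect1; rewrite expgSr permM; apply: gl.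
by rewrite -(fix_pow t gv) map_aut_adj ?map_autX.
Qed.

Lemma Rq_face q i : Rq q (Pv (fam q) i) = Pv (fam q) (i + 1).
Proof. by rewrite /Pv Rq_E; congr (_, _); ring. Qed.

Lemma Rq_pow q t i : (Rq q ^+ t)%g (Pv (fam q) i) = Pv (fam q) (i + t%:R).
Proof.
elim: t => [|t IH]; first by rewrite expg0 perm1 addr0.
by rewrite expgSr permM IH Rq_face -natr1 addrA.
Qed.

Lemma Fq_face q i : Fq q (Pv (fam q) i) = Pv (fam q) (- i).
Proof. by rewrite /Pv Fq_E; congr (_, _); ring. Qed.

Lemma face_rot f : f \in Mset -> exists2 g, map_aut adjn Mset g &
      [/\ fimage g f = f,
          (forall x y, x \in fverts f -> y \in fverts f -> exists k, (g ^+ k)%g x = y) &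
          (forall e e', e \in f -> e' \in f -> exists k, [set (g ^+ k)%g x | x in e] = e')].
Proof.
case/imsetP => q _ ->; exists (Rq q); first exact: aut_Rq.
split.
- by apply: (fimage_tr (c := 1)) => i; rewrite Rq_face.
- move=> x y /fverts_Cf [i ->] /fverts_Cf [j ->]; exists (val (j - i)).
  by rewrite Rq_pow natr_Zp addrC subrK.
- move=> e e' /imsetP [i _ ->] /imsetP [j _ ->]; exists (val (j - i)).
  rewrite /Ed imset2_ !Rq_pow natr_Zp addrC subrK.
  by rewrite (addrC (i + 1)) addrA subrK.
Qed.

Lemma face_refl f : f \in Mset -> exists2 g, map_aut adjn Mset g & acts_as_reflection f g.
Proof.
case/imsetP => q _ ->; exists (Fq q); first exact: aut_Fq.
split; first by apply: fimage_ref => i; rewrite Fq_face.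
exists (Dfwd (face q)); split; first exact: orient_fwd.
move=> x y /Dfwd_Cf [i [-> ->]]; apply/Dfwd_Cf; exists (- (i + 1)).
rewrite !Fq_face; congr (_, _); congr Pv; ring.
Qed.


Lemma edge_fwd (x y : V) : y.1 = x.1 + 1 -> #|[set f in Mset | [set x; y] \in f]| = 2.
Proof.
move=> hy; set i := x.1.
pose pe (e : 'I_m) : Tr :=
  let d := y.2 - x.2 - e * (vr i - hf i *+ 2) in (x.2 - d * vr i - e * hf i, d, e).
have fe0 : forall e, fam (pe e) i = x.2 by move=> e; rewrite /fam /=; ring.
have fe1 : forall e, fam (pe e) (i + 1) = y.2 by move=> e; rewrite famS /fam /=; ring.
have inf : forall e, [set x; y] \in face (pe e).
  move=> e; apply: (inCf (i := i)); rewrite /Pv ?fe0 ?fe1 -?hy; exact: surjective_pairing.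
have uq : forall p, p \in Famset -> [set x; y] \in face p -> p = pe p.2.
  move=> p pF /imsetP [j _ /Ed_set2 [[ex ey]|[ex ey]]].
    have ji : x.1 = j := f_equal fst ex.
    have e1 : x.2 = fam p j := f_equal snd ex.
    have e2 : y.2 = fam p (j + 1) := f_equal snd ey.
    rewrite -ji in e1 e2.
    apply: (param_det (i := i)); [by [] | by rewrite fe0 e1 | by rewrite fe1 e2].
  have h1 : y.1 = j := f_equal fst ey.
  have h2 : x.1 = j + 1 := f_equal fst ex.
  rewrite h1 h2 in hy.
  by move: (two_neq j); rewrite -hy eqxx.
have -> : [set f in Mset | [set x; y] \in f] = [set face (pe 0); face (pe 1)].
  apply/setP => f; rewrite !inE; apply/andP/orP.
    case=> /imsetP [p pF ->] hp; have E := uq p pF hp.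
    move: pF; rewrite inE => /orP [] /eqP e; rewrite E e eqxx; [left | right]; by [].
  case=> /eqP ->; split.
  - by apply: imset_f; rewrite inE eqxx.
  - exact: inf.
  - by apply: imset_f; rewrite inE eqxx orbT.
  - exact: inf.
rewrite cards2; suff -> : face (pe 0) != face (pe 1) by [].
apply/negP => /eqP /face_inj /(congr1 snd) /= /eqP; rewrite eq_sym oner_eq0.
by [].
Qed.

Lemma edge_count e : is_gedge (Cnm_adj n m) e -> #|[set f in Mset | e \in f]| = 2.
Proof.
case/existsP => x /existsP [y /andP [hxy /eqP ->]].
rewrite adjE in hxy; case/orP: hxy => /eqP h; first exact: edge_fwd.
by rewrite set2C_; apply: edge_fwd.
Qed.

Definition Ofun (f : {set {set V}}) : {set V * V} :=
  if [exists p, [&& p \in Famset, p.2 == 0 & f == face p]] then Dfwd f else Dbwd f.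

Lemma Ofun_face p : p \in Famset ->
  Ofun (face p) = if p.2 == 0 then Dfwd (face p) else Dbwd (face p).
Proof.
move=> pF; rewrite /Ofun.
case: (boolP (p.2 == 0)) => h0.
  have -> : [exists p', [&& p' \in Famset, p'.2 == 0 & face p == face p']] = true.
    by apply/existsP; exists p; rewrite pF h0 eqxx.
  by [].
have -> : [exists p', [&& p' \in Famset, p'.2 == 0 & face p == face p']] = false.
  apply/negbTE/existsP => [[p' /and3P [_ h0' /eqP /face_inj E]]].
  by move/negP: h0; apply; rewrite E.
by [].
Qed.

Lemma edge_type p p' x y : [set x; y] \in face p -> [set x; y] \in face p' ->
  p.2 = p'.2 -> p = p'.
Proof.
move=> /imsetP [j _ e1] /imsetP [j' _ e2] E.
rewrite e1 in e2; case: (Ed_eq e2) => jj f1 f2.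
exact: param_det E f1 f2.
Qed.

Lemma orientable_M : orientable Mset.
Proof.
exists Ofun; split.
  move=> f /imsetP [p pF ->]; rewrite Ofun_face //.
  by case: ifP => _; [exact: orient_fwd | exact: orient_bwd].
move=> f g x y /imsetP [p pF ->] /imsetP [p' pF' ->] neq hO hg.
have hf : [set x; y] \in face p.
  by move: hO; rewrite Ofun_face //; case: ifP => _; rewrite inE => /andP [].
have ne2 : p.2 != p'.2.
  by apply/negP => /eqP E; move/negP: neq; apply; rewrite (edge_type hf hg E).
move: hO; rewrite !Ofun_face //.
move: pF pF'; rewrite !inE => /orP [] /eqP e0 /orP [] /eqP e1; rewrite e0 e1 in ne2 *;
  rewrite ?eqxx // ?oner_eq0 /=.
- by rewrite inE => /andP [_ h]; rewrite inE set2C_ hg.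
- by rewrite inE => /andP [_ h]; rewrite inE set2C_ hg.
Qed.

Lemma card_layer (c : 'I_n) : #|[set u : V | u.1 == c]| = m.
Proof.
have -> : [set u : V | u.1 == c] = setX [set c] [set: 'I_m].
  by apply/setP => u; rewrite !inE andbT.
by rewrite cardsX cards1 cardsT card_ord mul1n.
Qed.

Lemma card_nbrs v : #|[set u | Cnm_adj n m v u]| = (2 * m)%N.
Proof.
have -> : [set u | Cnm_adj n m v u] =
          [set u : V | u.1 == v.1 + 1] :|: [set u : V | u.1 == v.1 - 1].
  apply/setP => u; rewrite !inE adjE; congr (_ || _).
  by rewrite [RHS]eq_sym subr_eq.
rewrite cardsU !card_layer.
have -> : [set u : V | u.1 == v.1 + 1] :&: [set u : V | u.1 == v.1 - 1] = set0.
  apply/setP => u; rewrite !inE; apply/negP => /andP [/eqP -> /eqP].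
  move/(congr1 (fun z => z + 1)); rewrite subrK => /eqP; by rewrite two_neq.
by rewrite cards0 subn0 mul2n addnn.
Qed.

Lemma graph_conn x y : connect (Cnm_adj n m) x y.
Proof.
apply: (connect_trans (y := (x.1 + 1, 0))).
  by apply: connect1; rewrite adjE eqxx.
apply: (connect_trans (y := (y.1 + 1, 0))).
  by apply: (connect_iter (Q := fun i => (i, 0))) => i; rewrite adjE eqxx.
by apply: connect1; rewrite adjE /= eqxx orbT.
Qed.

Definition e0 : {set V} := [set v0; (- 1, 0)].
Definition p0 : Tr := (0, 0, 0).
Lemma phi0 i : fam p0 i = 0.
Proof. by rewrite /fam /= !mul0r !addr0. Qed.

Lemma dist : dist_gens (Cnm_adj n m) Mset v0 e0 (face p0) (eta1 n m) (eta2 n m).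
Proof.
have p0F : p0 \in Famset by rewrite inE eqxx.
have rhoE : forall i j, (eta1 n m * eta2 n m)%g (i, j) = (- (i + 1), j + hf (i + 1)).
  by move=> i j; rewrite permM eta1_E eta2_E opprK.
case: VP_v0 => _ g2 gl _.
split.
- split; first exact: imset_f.
    apply: (inCf' (i := - 1)); rewrite /Pv phi0 //.
    by rewrite addNr.
  exact: set21.
- by split; [exact: aut_eta1 | exact: aut_eta2].
- split.
    by apply: (fimage_tr (c := 1)) => i; rewrite /Pv eta1_E !phi0 oppr0.
  exists (Dfwd (face p0)); split; first exact: orient_fwd.
  by move=> x y /Dfwd_Cf [i [-> ->]]; rewrite /Pv eta1_E !phi0 oppr0.
- by split.
- split.
  + apply/permP => [[i j]]; rewrite expgS expg1 permM !rhoE perm1.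
    have -> : - (- (i + 1) + 1) = i by ring.
    have -> : - (i + 1) + 1 = - i by ring.
    by rewrite hfN hfS; congr (_, _); ring.
  + apply/eqP => /permP /(_ v0); rewrite rhoE perm1 /v0 => /(congr1 fst) /= /eqP.
    by rewrite add0r oppr_eq0 oner_eq0.
  + move=> x; rewrite /e0 !inE => /orP [] /eqP ->; rewrite /v0 rhoE.
      rewrite add0r -(add0r 1) hfS vr0 hf0 subr0 !add0r eqxx orbT /=.
      by rewrite xpair_eqE oppr_eq0 oner_eq0.
    rewrite addNr hf0 addr0 oppr0 eqxx /=.
    by rewrite xpair_eqE eq_sym oppr_eq0 oner_eq0.
Qed.

Theorem main_sec : exists M : {set {set {set V}}},
    [/\ polytopal_map (Cnm_adj n m) M,
        orientable M,
        reflexible (Cnm_adj n m) M,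
        map_type (Cnm_adj n m) M n (2 * m) &
        exists v e f (s1 s2 : {perm V}),
          dist_gens (Cnm_adj n m) M v e f s1 s2 /\
          <<[set s1; s2]>>%g = <<[set eta1 n m; eta2 n m]>>%g].
Proof.
exists Mset; split.
- split.
  + exact: graph_conn.
  + by move=> f /imsetP [p _ ->]; apply: Cf_cycle.
  + exact: edge_count.
  + by move=> v u w hu hw; case: (VP_all v) => g hg; apply: (VP_link hg).
- exact: orientable_M.
- split; last exact: face_refl.
  split; last exact: face_rot.
  move=> v; case: (VP_all v) => g [ga gv gl gt]; exists g => //; split => // u w hu hw.
  case: (gt _ _ hu hw) => t ht; exists t.
  by rewrite imset2_ fix_pow // ht.
- split; last exact: card_nbrs.
  by move=> f /imsetP [p _ ->]; apply: card_Cf.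
- by exists v0, e0, (face p0), (eta1 n m), (eta2 n m); split; first exact: dist.
Qed.

End Main.

Theorem proposition5p7 (m s n : nat)
  (hm3 : 3 <= m) (hmodd : odd m)
  (hs2 : 2 <= s) (hseven : ~~ odd s) (hs4 : ~~ (4 %| s))
  (hn : n = s * m) :
  exists M : {set {set {set ('I_n * 'I_m)}}},
    [/\ polytopal_map (Cnm_adj n m) M,
        orientable M,
        reflexible (Cnm_adj n m) M,
        map_type (Cnm_adj n m) M n (2 * m) &
        exists v e f (s1 s2 : {perm 'I_n * 'I_m}),
          dist_gens (Cnm_adj n m) M v e f s1 s2 /\
          <<[set s1; s2]>>%g = <<[set eta1 n m; eta2 n m]>>%g].
Proof.
case: m hm3 hmodd hn => [|[|k]] // hm3 hmodd hn.
case: n hn => [|[|n']] hn; first [by exfalso; nia | idtac].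
have mz : ((k.+2)%:R : 'I_k.+2)%R = 0%R.
  exact: (pchar_Zp (p := k.+2)).
have hs : s = (s./2).*2 by rewrite even_halfK.
apply: main_sec.
- nia.
- by rewrite hn oddM (negbTE hseven).
- by rewrite hn natrM mz GRing.mulr0.
- by rewrite hn hs -doubleMl doubleK natrM mz GRing.mulr0.
Qed.
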